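(* For $n\ge 2$, the number of shallow $132$-avoiding centrosymmetric permutations in $S_n$ equals $\lceil (n+1)/2\rceil$.
   Context: For $\pi\in S_n$: $D(\pi)=\sum_{i}|\pi_i-i|$, $I(\pi)$ is the number of inversions, $T(\pi)=n-\mathrm{cyc}(\pi)$ with $\mathrm{cyc}$ the number of cycles in the disjoint cycle decomposition; $\pi$ is shallow if $I(\pi)+T(\pi)=D(\pi)$. A permutation avoids a pattern $\sigma$ if it has no subsequence order-isomorphic to $\sigma$. The reverse-complement $\pi^{rc}$ is defined by $\pi^{rc}_{n+1-i}=n+1-\pi_i$; $\pi$ is centrosymmetric if $\pi=\pi^{rc}$. *)

(* Defs.v *)
From mathcomp Require Import all_boot all_fingroup.
Set Implicit Arguments. Unset Strict Implicit. Unset Printing Implicit Defensive.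

(* Permutations of S_n are represented as s : {perm 'I_n}, acting on the
   0-based positions {0,...,n-1}; pi_i (1-based) corresponds to s (i-1) + 1. *)

Definition displacement n (s : {perm 'I_n}) : nat :=
  \sum_(i : 'I_n) (maxn (s i) i - minn (s i) i).

Definition inversions n (s : {perm 'I_n}) : nat :=
  #|[set p : 'I_n * 'I_n | (p.1 < p.2) && (s p.2 < s p.1)]|.

Definition ncycles n (s : {perm 'I_n}) : nat := #|porbits s|.

Definition transpositions n (s : {perm 'I_n}) : nat := n - ncycles s.

Definition shallow n (s : {perm 'I_n}) : bool :=
  inversions s + transpositions s == displacement s.

Definition avoids132 n (s : {perm 'I_n}) : bool :=
  ~~ [exists i : 'I_n, exists j : 'I_n, exists k : 'I_n,
        [&& i < j, j < k, s i < s k & s k < s j]].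

Definition centrosymmetric n (s : {perm 'I_n}) : bool :=
  [forall i : 'I_n, s (rev_ord i) == rev_ord (s i)].

(* Main.v *)
Require Import Defs.
From mathcomp Require Import all_boot all_fingroup zify.
Set Implicit Arguments. Unset Strict Implicit. Unset Printing Implicit Defensive.

Lemma card_sum (T : finType) (P : pred T) : #|[set z | P z]| = \sum_z P z.
Proof.
rewrite -sum1_card big_mkcond /=; apply: eq_bigr => z _; rewrite inE; by case: (P z).
Qed.

Lemma int_sum_nat lo hi n : \sum_(0 <= i < n) ((lo < i) && (i < hi)) = minn n hi - lo.+1.
Proof.
elim: n => [|n IH]; first by rewrite big_geq //; lia.
rewrite big_nat_recr //= IH.
case: (ltnP lo n) => H1; case: (ltnP n hi) => H2 /=; lia.
Qed.

Lemma card_int n lo hi : #|[set u : 'I_n | (lo < u) && (u < hi)]| = minn n hi - lo.+1.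
Proof.
by rewrite card_sum -(int_sum_nat lo hi n) big_mkord.
Qed.

Lemma sum2 n (F : 'I_n -> nat) (x y : 'I_n) : x != y ->
  \sum_i F i = F x + F y + \sum_(i | (i != x) && (i != y)) F i.
Proof.
move=> xy; rewrite (bigD1 x) //= (bigD1 y) /=; last by rewrite eq_sym.
rewrite addnA; congr (_ + _ + _); apply: eq_bigl => i; by rewrite andbC.
Qed.

Lemma porbits_le n (s : {perm 'I_n}) : #|porbits s| <= n.
Proof. by rewrite /porbits -[X in _ <= X]card_ord leq_imset_card. Qed.

Lemma porbits1 n : #|porbits (1 : {perm 'I_n})| = n.
Proof.
rewrite /porbits card_imset ?card_ord // => x y E.
have := porbit_id 1 x; rewrite E => /porbitP [i ->]; by rewrite expg1n perm1.
Qed.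

Lemma T_step n (s : {perm 'I_n}) (x y : 'I_n) :
  transpositions s <= transpositions (tperm x y * s) + 1.
Proof.
rewrite /transpositions /ncycles.
have := porbits_le s; have := porbits_le (tperm x y * s).
set a := #|porbits s|; set b := #|porbits _|.
have H : b + (x \notin porbit s y).*2 = a + (x != y) := porbits_mul_tperm s x y.
move: H; rewrite -muln2.
case: (x \notin _); case: (x != y) => /=; lia.
Qed.

Lemma T_step_eq n (s : {perm 'I_n}) (x y : 'I_n) : s y = x -> x != y ->
  transpositions s = transpositions (tperm x y * s) + 1.
Proof.
move=> sy xy; rewrite /transpositions /ncycles.
have := porbits_le s; have := porbits_le (tperm x y * s).
set a := #|porbits s|; set b := #|porbits _|.
have H : b + (x \notin porbit s y).*2 = a + (x != y) := porbits_mul_tperm s x y.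
move: H.
have -> : x \in porbit s y by rewrite -sy; have := mem_porbit s 1 y; rewrite expg1.
rewrite xy /= -muln2; lia.
Qed.

Lemma inv_sum n (s : {perm 'I_n}) :
  inversions s = \sum_(i : 'I_n) \sum_(j : 'I_n) ((i < j) && (s j < s i)).
Proof. by rewrite /inversions card_sum pair_big /=; by apply: eq_bigr => -[i j]. Qed.

Lemma dsum2 n (F : 'I_n -> 'I_n -> nat) (x y : 'I_n) : x != y ->
  \sum_i \sum_j F i j = F x x + F x y + F y x + F y y +
   \sum_(z | (z != x) && (z != y)) (F x z + F y z + (F z x + F z y)) +
   \sum_(i | (i != x) && (i != y)) \sum_(j | (j != x) && (j != y)) F i j.
Proof.
move=> nxy.
under eq_bigr => i _ do rewrite (sum2 (F i) nxy).
rewrite (sum2 _ nxy).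
rewrite [in RHS]big_split /= [in RHS]big_split /= [in RHS]big_split /=.
rewrite [in LHS]big_split /= [in LHS]big_split /=; lia.
Qed.

Lemma pz (x y z a b c : nat) : x < y -> b < a -> z != x -> z != y -> c != a -> c != b ->
  ((x < z) && (c < a)) + ((y < z) && (c < b)) + (((z < x) && (a < c)) + ((z < y) && (b < c)))
  = ((x < z) && (c < b)) + ((y < z) && (c < a)) + (((z < x) && (b < c)) + ((z < y) && (a < c)))
    + 2 * ((x < z < y) && (b < c < a)).
Proof.
move=> xy ba; rewrite !neq_ltn.
case: (ltngtP z x) => //= H1 _; case: (ltngtP z y) => //= H2 _;
case: (ltngtP c a) => //= H3 _; case: (ltngtP c b) => //= H4 _;
rewrite ?H1 ?H2 ?H3 ?H4 /=; try lia.
Qed.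

Lemma inv_step n (s : {perm 'I_n}) (x y : 'I_n) : x < y -> s y < s x ->
  inversions s = inversions (tperm x y * s)%g + 1 +
    2 * #|[set z : 'I_n | (x < z < y) && (s y < s z < s x)]|.
Proof.
move=> xy sxy.
have nxy : x != y by rewrite neq_ltn xy.
set t := (tperm x y * s)%g.
have tx : t x = s y by rewrite /t permM tpermL.
have ty : t y = s x by rewrite /t permM tpermR.
have tz : forall z, z != x -> z != y -> t z = s z.
  by move=> z zx zy; rewrite /t permM tpermD // eq_sym.
rewrite !inv_sum card_sum !(dsum2 _ nxy) (sum2 _ nxy).
rewrite tx ty !ltnn /= xy sxy ltnNge (ltnW xy) ltnNge (ltnW sxy) /=.
have -> : \sum_(i | (i != x) && (i != y)) \sum_(j | (j != x) && (j != y)) ((i < j) && (t j < t i))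
   = \sum_(i | (i != x) && (i != y)) \sum_(j | (j != x) && (j != y)) ((i < j) && (s j < s i)).
  apply: eq_bigr => i /andP [ix iy]; apply: eq_bigr => j /andP [jx jy]; by rewrite !tz.
have -> : \sum_(z | (z != x) && (z != y))
    ((x < z) && (s z < s x) + (y < z) && (s z < s y) + ((z < x) && (s x < s z) + (z < y) && (s y < s z)))
  = \sum_(z | (z != x) && (z != y))
    ((x < z) && (t z < s y) + (y < z) && (t z < s x) + ((z < x) && (s y < t z) + (z < y) && (s x < t z)))
  + 2 * \sum_(z | (z != x) && (z != y)) ((x < z < y) && (s y < s z < s x)).
  rewrite big_distrr /= -big_split /=; apply: eq_bigr => z /andP [zx zy].
  rewrite tz //; apply: pz => //.
  - by apply: contra zx => /eqP/val_inj/perm_inj ->.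
  - by apply: contra zy => /eqP/val_inj/perm_inj ->.
set A := \sum_(i | _) \sum_(j | _) _.
set B := \sum_(z : 'I_n | _) (_ + _ + _).
set C := \sum_(z : 'I_n | _) [&& _, _ & _].
lia.
Qed.

Definition dd (a b : nat) := maxn a b - minn a b.

Lemma D_step n (s : {perm 'I_n}) (x y : 'I_n) : x != y ->
  displacement s + dd (s y) x + dd (s x) y =
  displacement (tperm x y * s)%g + dd (s x) x + dd (s y) y.
Proof.
move=> nxy; rewrite /displacement /dd !(sum2 _ nxy) !permM tpermL tpermR.
rewrite [in RHS](eq_bigr (fun i : 'I_n => maxn (s i) i - minn (s i) i)); last first.
  by move=> i /andP[ix iy]; rewrite permM tpermD // eq_sym.
set A := \sum_(i : 'I_n | _) _.
lia.
Qed.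

Lemma inv1 n : inversions (1 : {perm 'I_n}) = 0.
Proof. by rewrite inv_sum big1 // => i _; rewrite big1 // => j _; rewrite !perm1; case: ltngtP. Qed.

Lemma T1 n : transpositions (1 : {perm 'I_n}) = 0.
Proof. by rewrite /transpositions /ncycles porbits1 subnn. Qed.

Lemma sub_int_card n (A : {set 'I_n}) lo hi :
  A \subset [set u : 'I_n | (lo < u) && (u < hi)] -> #|A| <= hi - lo.+1.
Proof.
move=> /subset_leq_card; rewrite card_int; lia.
Qed.

Lemma pre_int_card n (s : {perm 'I_n}) (A : {set 'I_n}) lo hi :
  A \subset s @^-1: [set u : 'I_n | (lo < u) && (u < hi)] -> #|A| <= hi - lo.+1.
Proof.
move=> /subset_leq_card; rewrite card_preimset; last exact: perm_inj.
rewrite card_int; lia.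
Qed.

Lemma DG n (s : {perm 'I_n}) : inversions s + transpositions s <= displacement s.
Proof.
have [m lt_m] := ubnP #|[set i | s i != i]|; elim: m s lt_m => // m IH s Hs.
case: (pickP (fun i => s i != i)) => [i0 Hi0|Hfix]; last first.
  have -> : s = 1%g by apply/permP => i; rewrite perm1; apply/eqP; have := Hfix i; by move/negbFE.
  by rewrite inv1 T1.
case: (@arg_maxnP _ i0 (fun i => s i != i) (fun i : 'I_n => val i) Hi0) => M HM Mmax.
set J := (s^-1)%g M.
have sJ : s J = M by rewrite /J permKV.
have JM : J < M.
  rewrite ltn_neqAle; apply/andP; split.
    apply/negP => /eqP/val_inj E; move: HM; by rewrite -E sJ E eqxx.
  case: (leqP J M) => // H.
  have : s J != J by rewrite sJ; apply/negP => /eqP E; move: H; rewrite E ltnn.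
  move/Mmax => /= ?; lia.
have bM : s M < M.
  rewrite ltn_neqAle; apply/andP; split; first by apply/negP => /eqP/val_inj E; move: HM; rewrite E eqxx.
  case: (leqP (s M) M) => // H.
  have : s (s M) != s M.
    apply/negP => /eqP /perm_inj E; move: H; by rewrite E ltnn.
  move/Mmax => /= ?; lia.
have nJM : J != M by rewrite neq_ltn JM.
set s' := (tperm J M * s)%g.
have Hs' : #|[set i | s' i != i]| < m.
  have sub : [set i | s' i != i] \subset [set i | s i != i] :\ M.
    apply/subsetP => i; rewrite !inE /s' permM.
    case: (eqVneq i M) => [->|iM]; first by rewrite tpermR sJ eqxx.
    case: (eqVneq i J) => [->|iJ]; first by rewrite tpermL sJ => _; rewrite eq_sym nJM.
    by rewrite tpermD // eq_sym.
  have := subset_leq_card sub; rewrite [#|[set i | s i != i]|](cardsD1 M) inE HM /= in Hs.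
  move=> H; apply: (leq_ltn_trans H); move: Hs; by rewrite add1n ltnS.
have IHs' := IH s' Hs'.
have sMJ : s M < s J by rewrite sJ.
have Hinv := inv_step JM sMJ.
have HD := D_step s nJM.
have HT := T_step s J M.
set c := #|_| in Hinv.
have Hc : c + 1 <= M - maxn J (s M).
  case: (leqP (s M) J) => H.
    have : c <= M - J.+1.
      apply: sub_int_card; apply/subsetP => z; rewrite !inE => /andP[/andP[-> ->] _] //.
    lia.
  have : c <= M - (s M).+1.
    apply: (pre_int_card (s := s)); apply/subsetP => z; rewrite !inE sJ => /andP[_ /andP[-> ->]] //.
  lia.
move: HD Hinv HT; rewrite sJ /dd -/s'; lia.
Qed.

Definition rfun n (k : nat) (i : 'I_n) : 'I_n := if (i < k) || (n - k <= i) then rev_ord i else i.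
Arguments rfun : clear implicits.

Lemma rfunK n (k : nat) : involutive (rfun n k).
Proof.
move=> i; apply: val_inj; have := ltn_ord i; rewrite /rfun.
case: (boolP ((i < k) || (n - k <= i))) => H /= Hi.
  rewrite ifT ?rev_ordK //; case/orP: H => H; apply/orP; [right|left]; lia.
by rewrite (negbTE H).
Qed.
Arguments rfunK : clear implicits.

Definition rperm n k : {perm 'I_n} := perm (can_inj (rfunK n k)).

Lemma rperm_val n k (i : 'I_n) :
  val (rperm n k i) = if (i < k) || (n - k <= i) then n - i.+1 else i.
Proof. by rewrite /rperm permE /rfun; case: ifP. Qed.

Lemma rperm0 n : rperm n 0 = 1%g.
Proof.
apply/permP => i; apply: val_inj; rewrite rperm_val perm1 subn0.
by rewrite ltn0 leqNgt ltn_ord.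
Qed.

Lemma rperm_av n k : avoids132 (rperm n k).
Proof.
apply/existsPn => i; apply/existsPn => j; apply/existsPn => l.
apply/negP => /and4P [h1 h2]; rewrite !rperm_val.
have := ltn_ord l.
case: (ltnP i k) => ?; case: (leqP (n - k) i) => ? /=;
case: (ltnP j k) => ?; case: (leqP (n - k) j) => ? /=;
case: (ltnP l k) => ?; case: (leqP (n - k) l) => ? /=; lia.
Qed.

Lemma rperm_cs n k : centrosymmetric (rperm n k).
Proof.
apply/forallP => i; apply/eqP/val_inj; rewrite /= !rperm_val /=.
have := ltn_ord i.
case: (ltnP i k) => ?; case: (leqP (n - k) i) => ? /=;
case: (ltnP (n - i.+1) k) => ?; case: (leqP (n - k) (n - i.+1)) => ? /=; lia.
Qed.

Lemma D1 n : displacement (1 : {perm 'I_n}) = 0.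
Proof. by rewrite /displacement big1 // => i _; rewrite perm1 maxnn minnn subnn. Qed.

Lemma rperm_shallow n k : k <= n./2 -> shallow (rperm n k).
Proof.
elim: k => [|k IH] hk; first by rewrite rperm0 /shallow inv1 T1 D1.
have kn : k < n by lia.
have yn : n - k.+1 < n by lia.
pose x := Ordinal kn; pose y := Ordinal yn.
have xy : x < y by rewrite /=; lia.
have nxy : x != y by rewrite neq_ltn xy.
set r := rperm n k.+1.
have rx : r x = y by apply: val_inj; rewrite rperm_val /= ifT //; apply/orP; left; lia.
have ry : r y = x by apply: val_inj; rewrite rperm_val /= ifT //; [lia | apply/orP; right; lia].
have E : (tperm x y * r)%g = rperm n k.
  apply/permP => i; apply: val_inj; rewrite permM.
  case: (eqVneq i x) => [->|ix]; first by rewrite tpermL ry rperm_val /=; case: ifP => //; lia.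
  case: (eqVneq i y) => [->|iy]; first by rewrite tpermR rx rperm_val /=; case: ifP => //; lia.
  rewrite tpermD 1?eq_sym // !rperm_val.
  have : val i != k by apply: contra ix => /eqP H; apply/eqP/val_inj.
  have : val i != n - k.+1 by apply: contra iy => /eqP H; apply/eqP/val_inj.
  have := ltn_ord i.
  case: (ltnP i k) => ?; case: (leqP (n - k) i) => ? /=;
  case: (ltnP i k.+1) => ?; case: (leqP (n - k.+1) i) => ? /=; lia.
have ryx : r y < r x by rewrite rx ry.
have Hinv := inv_step xy ryx.
have HD := D_step r nxy.
have HT := T_step_eq ry nxy.
have Hc : [set z : 'I_n | (x < z < y) && (r y < r z < r x)] = [set z : 'I_n | (k < z) && (z < n - k.+1)].
  apply/setP => z; rewrite !inE rx ry rperm_val /=.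
  have := ltn_ord z.
  case: (ltnP z k.+1) => ?; case: (leqP (n - k.+1) z) => ? /=; lia.
move: Hinv; rewrite Hc card_int.
move: HD HT; rewrite E rx ry /dd /=.
have := IH (ltnW hk); rewrite /shallow => /eqP.
move=> *; apply/eqP; lia.
Qed.

Lemma av132P n (s : {perm 'I_n}) : avoids132 s ->
  forall i j l : 'I_n, i < j -> j < l -> s i < s l -> s l < s j -> False.
Proof.
move=> /existsPn H i j l h1 h2 h3 h4.
move: (H i) => /existsPn /(_ j) /existsPn /(_ l); by rewrite h1 h2 h3 h4.
Qed.

Lemma csP n (s : {perm 'I_n}) : centrosymmetric s -> forall i, s (rev_ord i) = rev_ord (s i).
Proof. by move=> /forallP H i; apply/eqP. Qed.

Lemma no213 n (s : {perm 'I_n}) : avoids132 s -> centrosymmetric s ->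
  forall i j l : 'I_n, i < j -> j < l -> s j < s i -> s i < s l -> False.
Proof.
move=> av cs i j l h1 h2 h3 h4.
apply: (av132P av (i := rev_ord l) (j := rev_ord j) (l := rev_ord i)); rewrite ?csP //=.
- have := ltn_ord l; lia.
- have := ltn_ord j; lia.
- have := ltn_ord (s l); lia.
- have := ltn_ord (s i); lia.
Qed.

Section Win.
Variables (n : nat) (s : {perm 'I_n}) (k : nat).
Hypothesis H2k : 2 * k <= n.
Hypothesis cs : centrosymmetric s.
Hypothesis oh : forall j : 'I_n, j < k -> nat_of_ord (s j) = n - j.+1.

Lemma outer (j : 'I_n) : (j < k) || (n - k <= j) -> nat_of_ord (s j) = n - j.+1.
Proof.
case/orP => H; first exact: oh.
have hj : n - j.+1 < k by have := ltn_ord j; lia.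
have := oh (j := rev_ord j) hj.
rewrite csP //= => E.
have := ltn_ord (s j); have := ltn_ord j; lia.
Qed.

Lemma win_pre (p : 'I_n) : k <= s p < n - k -> k <= p < n - k.
Proof.
move=> /andP [h1 h2].
case: (boolP ((p < k) || (n - k <= p))) => H.
  have := outer H; have := ltn_ord p; case/orP: H; lia.
move: H; rewrite negb_or => /andP [H1 H2]; rewrite -leqNgt in H1; rewrite -ltnNge in H2; by rewrite H1 H2.
Qed.

Lemma window (z : 'I_n) : k <= z < n - k -> k <= s z < n - k.
Proof.
move=> /andP [h1 h2].
case: (boolP ((s z < k) || (n - k <= s z))) => H; last first.
  move: H; rewrite negb_or => /andP [H1 H2]; rewrite -leqNgt in H1; rewrite -ltnNge in H2; by rewrite H1 H2.
have hw : (rev_ord (s z) < k) || (n - k <= rev_ord (s z)).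
  move: H => /orP [H|H]; apply/orP; [right|left]; rewrite /=; have := ltn_ord (s z); lia.
have E := outer hw.
have E' : s (rev_ord (s z)) = s z.
  apply: ord_inj; rewrite E /=; have := ltn_ord (s z); lia.
move: (perm_inj E') => Ez.
move: hw; rewrite Ez; lia.
Qed.

End Win.

Lemma idwin n (s : {perm 'I_n}) k (k0 : 'I_n) : 2 * k <= n -> nat_of_ord k0 = k ->
  avoids132 s -> centrosymmetric s ->
  (forall j : 'I_n, j < k -> nat_of_ord (s j) = n - j.+1) -> nat_of_ord (s k0) = k ->
  forall z : 'I_n, k <= z < n - k -> nat_of_ord (s z) = z.
Proof.
move=> H2k Hk0 av cs oh sk0 z Hz.
apply/eqP; apply/negPn/negP => Hne.
have P0 : (k <= z < n - k) && (nat_of_ord (s z) != z) by rewrite Hz Hne.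
case: (@arg_minnP _ z (fun p : 'I_n => (k <= p < n - k) && (nat_of_ord (s p) != p))
         (fun p => nat_of_ord p) P0) => p /andP[pW pne] pmin.
have minfix : forall u : 'I_n, k <= u -> u < p -> nat_of_ord (s u) = u.
  move=> u h1 h2; apply/eqP; apply/negPn/negP => hu.
  have h3 : u < n - k by move: pW => /andP[_ ?]; lia.
  have := pmin u; rewrite h1 h3 hu /= => /(_ isT); lia.
have sW := window H2k cs oh pW.
have pgt : p < s p.
  rewrite ltnNge; apply/negP => h.
  have hlt : s p < p by rewrite ltn_neqAle h andbT.
  have E := minfix (s p) (ltac:(by case/andP: sW)) hlt.
  move: (perm_inj (ord_inj E)) => E'; move: pne; by rewrite E' eqxx.
pose q := (s^-1)%g p.
have sq : s q = p by rewrite /q permKV.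
have qW : k <= q < n - k by apply: (win_pre H2k cs oh); rewrite sq.
have pk : k < p.
  rewrite ltn_neqAle; case/andP: pW => -> _; rewrite andbT.
  apply/negP => /eqP E; have E' : k0 = p by apply: ord_inj; rewrite Hk0.
  move: pne; by rewrite -E' sk0 Hk0 eqxx.
have qp : p < q.
  case: (ltngtP p q) => // h.
    have := minfix q (ltac:(by case/andP: qW)) h; rewrite sq => E.
    move: h; rewrite E ltnn //.
  have E : q = p by apply: ord_inj.
  move: pne; by rewrite -{1}E sq eqxx.
apply: (av132P av (i := k0) (j := p) (l := q)); rewrite ?sq ?sk0 ?Hk0 //.
Qed.

Lemma strict_case n (s : {perm 'I_n}) (k0 : 'I_n) :
  avoids132 s -> centrosymmetric s -> 2 * k0 < n ->
  (forall j : 'I_n, j < k0 -> nat_of_ord (s j) = n - j.+1) ->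
  nat_of_ord (s k0) != k0 -> nat_of_ord (s k0) != n - k0.+1 ->
  inversions s + transpositions s < displacement s.
Proof.
move=> av cs H2k oh vk vr.
set k := nat_of_ord k0 in H2k oh vk vr *.
have H2k' : 2 * k <= n by lia.
have k0W : k <= k0 < n - k by rewrite /k leqnn /=; lia.
have vW := window H2k' cs oh k0W.
set v := nat_of_ord (s k0) in vk vr vW.
have kv : k < v by case/andP: vW => h _; lia.
have vr' : v < n - k.+1 by case/andP: vW => _ h; lia.
have k1n : k.+1 < n by lia.
pose K1 := Ordinal k1n.
have sK1 : v < s K1.
  have v1n : v.+1 < n by lia.
  pose V1 := Ordinal v1n.
  pose p := (s^-1)%g V1.
  have sp : s p = V1 by rewrite /p permKV.
  have pW : k <= p < n - k by apply: (win_pre H2k' cs oh); rewrite sp /=; lia.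
  rewrite ltnNge; apply/negP => h.
  have h' : s K1 < v.
    rewrite ltn_neqAle h andbT; apply/negP => /eqP E.
    have := perm_inj (ord_inj E); move/(congr1 (@nat_of_ord n)) => /=; lia.
  have pk : k.+1 < p.
    case/andP: pW => h1 _; rewrite ltn_neqAle; apply/andP; split; last first.
      rewrite ltn_neqAle h1 andbT; apply/negP => /eqP E.
      have E' : k0 = p by apply: ord_inj.
      move: sp; rewrite -E' => /(congr1 (@nat_of_ord n)) /=; lia.
    apply/negP => /eqP E; have E' : K1 = p by apply: ord_inj.
    move: sp; rewrite -E' => /(congr1 (@nat_of_ord n)) /=; lia.
  apply: (no213 av cs (i := k0) (j := K1) (l := p)); rewrite ?sp //=; lia.
pose Q := (s^-1)%g k0.
have sQ : s Q = k0 by rewrite /Q permKV.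
have QW : k <= Q < n - k by apply: (win_pre H2k' cs oh); rewrite sQ.
have kQ : k.+1 < Q.
  case/andP: QW => h1 _; rewrite ltn_neqAle; apply/andP; split; last first.
    rewrite ltn_neqAle h1 andbT; apply/negP => /eqP E.
    have E' : k0 = Q by apply: ord_inj.
    move: vk; by rewrite /v E' sQ eqxx.
  apply/negP => /eqP E; have E' : K1 = Q by apply: ord_inj.
  move: sK1; rewrite E' sQ; lia.
have k0Q : k0 < Q by rewrite /k in kQ; lia.
have sQk : s Q < s k0 by rewrite sQ.
have nkQ : k0 != Q by rewrite neq_ltn k0Q.
have Hinv := inv_step k0Q sQk.
have HD := D_step s nkQ.
have HT := T_step s k0 Q.
set s' := (tperm k0 Q * s)%g in Hinv HD HT.
have HDG := DG s'.
set c := #|_| in Hinv.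
have Hc : c + 2 <= minn v Q - k.
  case: (leqP (nat_of_ord Q) v) => HQv.
    have : c <= Q - k.+2.
      apply: sub_int_card; apply/subsetP => z; rewrite !inE sQ => /andP[/andP[h1 h2] /andP[h3 h4]].
      rewrite h2 andbT ltn_neqAle; apply/andP; split; last exact h1.
      apply/negP => /eqP E; have E' : K1 = z by apply: ord_inj.
      move: h4; rewrite -E'; rewrite -/v; lia.
    lia.
  have QnK : Q < n - k.+1.
    case/andP: QW => _ h; rewrite ltn_neqAle; apply/andP; split; last by lia.
    apply/negP => /eqP E.
    have E' : Q = rev_ord k0 by apply: ord_inj; rewrite /= E.
    have := csP cs k0; rewrite -E' sQ => /(congr1 (@nat_of_ord n)) /=.
    rewrite -/v; lia.
  have q1n : Q.+1 < n by lia.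
  pose Q1 := Ordinal q1n.
  have Q1W : k <= Q1 < n - k by rewrite /=; lia.
  have wW := window H2k' cs oh Q1W.
  set w := s Q1 in wW.
  have wk : k < w.
    case/andP: wW => h _; rewrite ltn_neqAle h andbT; apply/negP => /eqP E.
    have E' : w = k0 by apply: ord_inj.
    have := perm_inj (etrans E' (esym sQ)) => /(congr1 (@nat_of_ord n)) /=; lia.
  have wv : w < v.
    rewrite ltn_neqAle; apply/andP; split.
      apply/negP => /eqP E; have := perm_inj (ord_inj E) => /(congr1 (@nat_of_ord n)) /=; lia.
    rewrite leqNgt; apply/negP => h.
    by apply: (no213 av cs (i := k0) (j := Q) (l := Q1)); rewrite ?sQ //=; lia.
  have sub : [set z : 'I_n | (k0 < z < Q) && (s Q < s z < s k0)] \subset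
             s @^-1: ([set u : 'I_n | (k < u) && (u < v)] :\ w).
    apply/subsetP => z; rewrite !inE sQ => /andP[/andP[h1 h2] /andP[h3 h4]].
    apply/andP; split; last by rewrite h3 h4.
    apply/eqP => E.
    have := perm_inj E => E'; move: h2; rewrite E' /=; lia.
  have := subset_leq_card sub; rewrite card_preimset; last exact: perm_inj.
  have := cardsD1 w [set u : 'I_n | (k < u) && (u < v)]; rewrite inE wk wv card_int /=.
  move=> h1 h2; have : c <= minn n v - k.+1 - 1.
    rewrite /c; move: h2; rewrite h1 => h3; rewrite add1n subn1 /=; exact: h3.
  lia.
move: HD Hinv HT; rewrite sQ /dd -/v; lia.
Qed.

Lemma structure n (s : {perm 'I_n}) : avoids132 s -> centrosymmetric s ->
  (exists2 k, k <= n./2 & s = rperm n k) \/ inversions s + transpositions s < displacement s.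
Proof.
move=> av cs.
case: (pickP (fun i : 'I_n => (i < n./2) && (nat_of_ord (s i) != n - i.+1))) => [i0 Hi0|Hnone].
  case: (@arg_minnP _ i0 (fun i : 'I_n => (i < n./2) && (nat_of_ord (s i) != n - i.+1)) (fun i : 'I_n => nat_of_ord i) Hi0) => k0 /andP[k0h k0ne] kmin.
  have oh : forall j : 'I_n, j < k0 -> nat_of_ord (s j) = n - j.+1.
    move=> j hj; apply/eqP; apply/negPn/negP => hne.
    have := kmin j; rewrite hne andbT => /(_ (ltn_trans hj k0h)) /=; lia.
  have H2k : 2 * k0 < n by lia.
  case: (eqVneq (nat_of_ord (s k0)) k0) => Hv; last by right; apply: (strict_case av cs H2k oh Hv k0ne).
  left; exists k0; first exact: ltnW.
  apply/permP => z; apply: ord_inj; rewrite rperm_val.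
  case: ifP => H.
    exact: (outer (k := k0) (ltnW H2k) cs oh).
  apply: (idwin (k0 := k0) (ltnW H2k) erefl av cs oh Hv).
  move: H => /negbT; rewrite negb_or => /andP[H1 H2]; rewrite -leqNgt in H1; rewrite -ltnNge in H2.
  by rewrite H1 H2.
left; exists n./2 => //.
have oh : forall j : 'I_n, j < n./2 -> nat_of_ord (s j) = n - j.+1.
  move=> j hj; have := Hnone j; rewrite hj /= => /negbFE /eqP //.
have H2k : 2 * n./2 <= n by lia.
apply/permP => z; apply: ord_inj; rewrite rperm_val.
case: ifP => H; first exact: (outer H2k cs oh).
move: H => /negbT; rewrite negb_or => /andP[H1 H2]; rewrite -leqNgt in H1; rewrite -ltnNge in H2.
have := window H2k cs oh (z := z); rewrite H1 H2 => /(_ isT); lia.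
Qed.

Lemma rperm_neq n k1 k2 : k1 < k2 -> k2 <= n./2 -> rperm n k1 != rperm n k2.
Proof.
move=> h1 h2; have k1n : k1 < n by lia.
apply/negP => /eqP E.
have := congr1 (fun p : {perm 'I_n} => nat_of_ord (p (Ordinal k1n))) E => /=.
rewrite !rperm_val /= ltnn h1 /=.
have -> : (n - k1 <= k1) = false by apply/negbTE; rewrite -ltnNge; lia.
lia.
Qed.

Theorem theorem3p7 (n : nat) (hn : 2 <= n) :
  #|[set s : {perm 'I_n} | [&& shallow s, avoids132 s & centrosymmetric s]]|
  = (n + 2) %/ 2.
Proof.
have -> : [set s : {perm 'I_n} | [&& shallow s, avoids132 s & centrosymmetric s]]
   = [set rperm n (nat_of_ord k) | k : 'I_(n./2).+1].
  apply/setP => s; rewrite inE; apply/idP/imsetP.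
    case/and3P => sh av cs.
    case: (structure av cs) => [[k hk ->]|H].
      by exists (Ordinal (hk : k < (n./2).+1)).
    move: sh; rewrite /shallow => /eqP E; lia.
  case=> k _ ->; rewrite rperm_shallow ?rperm_av ?rperm_cs //.
  by have := ltn_ord k; rewrite ltnS.
rewrite card_imset ?card_ord; first lia.
move=> a b E; apply: ord_inj.
have ha := ltn_ord a; have hb := ltn_ord b.
case: (ltngtP a b) => // h.
  by move: (rperm_neq (n := n) h (ltac:(lia))); rewrite E eqxx.
by move: (rperm_neq (n := n) h (ltac:(lia))); rewrite E eqxx.
Qed.
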